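(* In every run of the algorithm described in the context, for every correct process $p_i$ and every $j\in\{1,\dots,n\}$, the following hold at every time: (R1) if $w\_sync_i[i]=w\_sync_i[j]=x$, then $p_i$ has sent $x$ messages of type $\textsc{write}(-,-)$ to $p_j$; (R2) if $w\_sync_i[i]>w\_sync_i[j]=x$, then $p_i$ has sent $x+1$ messages of type $\textsc{write}(-,-)$ to $p_j$.
   Context: Model. There are $n$ asynchronous processes $p_1,\dots,p_n$, of which up to $t<n/2$ may crash; a process runs its algorithm correctly until it crashes, and a process that never crashes is correct. Each ordered pair of processes is linked by a reliable (no loss, corruption, duplication or creation), asynchronous, not necessarily FIFO channel. $p_w$ is the single writer, invoking writes sequentially; $v_0$ is the initial value. Messages: $\textsc{write}(b,v)$ with $b\in\{0,1\}$, which stands for the two types $\textsc{write0}(v)$ and $\textsc{write1}(v)$; $\textsc{read}()$; $\textsc{proceed}()$. Variables of $p_i$. These are: $history_i$ with $history_i[0]=v_0$; $w\_sync_i[1..n]$, initially all $0$; $r\_sync_i[1..n]$, initially all $0$. $\mathsf{write}(v)$ by $p_w$: $wsn\gets w\_sync_w[w]+1$; $w\_sync_w[w]\gets wsn$; $history_w[wsn]\gets v$. Send $\textsc{write}(wsn\bmod 2,v)$ to each $p_j$ with $w\_sync_w[j]=wsn-1$. Wait until at least $n-t$ indices $j$ have $w\_sync_w[j]=wsn$. Return. $\mathsf{read}()$ by $p_i$: $r\_sync_i[i]\gets r\_sync_i[i]+1$ and call the new value $rsn$. Send $\textsc{read}()$ to all $p_j$ with $j\ne i$. Wait until at least $n-t$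 indices $j$ have $r\_sync_i[j]=rsn$. Let $sn\gets w\_sync_i[i]$. Wait until at least $n-t$ indices $j$ have $w\_sync_i[j]\ge sn$. Return $history_i[sn]$. On receipt of $\textsc{write}(b,v)$ from $p_j$ at $p_i$: Wait until $b=(w\_sync_i[j]+1)\bmod 2$. Let $wsn\gets w\_sync_i[j]+1$. If $wsn=w\_sync_i[i]+1$, then set $w\_sync_i[i]\gets wsn$ and $history_i[wsn]\gets v$, and send $\textsc{write}(wsn\bmod 2,v)$ to each $p_\ell$ with $w\_sync_i[\ell]=wsn-1$. Else, if $wsn<w\_sync_i[i]$, send $\textsc{write}((wsn+1)\bmod 2,history_i[wsn+1])$ to $p_j$. Finally set $w\_sync_i[j]\gets wsn$. On receipt of $\textsc{read}()$ from $p_j$ at $p_i$: Let $sn\gets w\_sync_i[i]$; wait until $w\_sync_i[j]\ge sn$; send $\textsc{proceed}()$ to $p_j$. On receipt of $\textsc{proceed}()$ from $p_j$ at $p_i$: $r\_sync_i[j]\gets r\_sync_i[j]+1$. Message handlers run concurrently; a waiting handler does not block the reception of other messages. *)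

(* Defs.v *)
From mathcomp Require Import all_boot.
Set Implicit Arguments.
Unset Strict Implicit.
Unset Printing Implicit Defensive.

Section Algorithm.

(* V : the type of register values, v0 the initial value,
   n processes indexed by 'I_n, t the crash bound, w the writer. *)
Context (V : Type) (v0 : V) (n t : nat) (w : 'I_n).

Inductive msg : Type :=
| MWrite of nat & V
| MRead
| MProceed.

Definition is_write (m : msg) : bool :=
  if m is MWrite _ _ then true else false.

(* A message in transit / a sent message: (sender, receiver, content). *)
Definition packet := ('I_n * 'I_n * msg)%type.

(* State of the (at most one) pending operation of a process. *)
Inductive opstate : Type :=
| Idle
| WWait of nat      (* write, waiting for n-t indices with w_sync[j] = wsn *)
| RWait1 of nat     (* read, waiting for n-t indices with r_sync[j] = rsn *)
| RWait2 of nat.    (* read, waiting for n-t indices with w_sync[j] >= sn *)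

(* Message-handler instances that have received their message and are
   blocked at their "wait until" statement. *)
Inductive handler : Type :=
| HWrite of 'I_n & nat & V   (* WRITE(b,v) received from p_j *)
| HRead of 'I_n & nat.       (* READ() received from p_j, with captured sn *)

Record pstate : Type := PState {
  history : nat -> V;
  w_sync  : 'I_n -> nat;
  r_sync  : 'I_n -> nat;
  op      : opstate;
  hdls    : seq handler;
  crashed : bool }.

Record config : Type := Config {
  procs : 'I_n -> pstate;
  net   : seq packet;     (* messages in transit (a multiset; non-FIFO) *)
  sent  : seq packet }.   (* log of every message ever sent *)

Definition upd {A : Type} (f : 'I_n -> A) (k : 'I_n) (a : A) : 'I_n -> A :=
  fun x => if x == k then a else f x.

Definition updn {A : Type} (f : nat -> A) (k : nat) (a : A) : nat -> A :=
  fun x => if x == k then a else f x.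

Definition init_pstate : pstate :=
  PState (fun _ => v0) (fun _ => 0) (fun _ => 0) Idle [::] false.

Definition init_config : config :=
  Config (fun _ => init_pstate) [::] [::].

Definition send (c : config) (ps : seq packet) (P : 'I_n -> pstate) : config :=
  Config P (net c ++ ps) (sent c ++ ps).

Definition with_proc (c : config) (i : 'I_n) (s : pstate) : 'I_n -> pstate :=
  upd (procs c) i s.

Definition ncrashed (c : config) : nat :=
  #|[pred k : 'I_n | crashed (procs c k)]|.

(* One atomic step of the system.  Local code between two "wait until"
   statements is executed atomically (together with the evaluation of the
   guard of the wait that precedes it). *)
Inductive step : config -> config -> Prop :=
| st_write_inv c v :
    let s := procs c w in
    ~~ crashed s -> op s = Idle ->
    let wsn := (w_sync s w).+1 in
    let ws' := upd (w_sync s) w wsn in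
    let s' := PState (updn (history s) wsn v) ws' (r_sync s) (WWait wsn)
                     (hdls s) (crashed s) in
    let ps := [seq (w, j, MWrite (wsn %% 2) v)
              | j <- enum 'I_n & ws' j == wsn - 1] in
    step c (send c ps (with_proc c w s'))
| st_write_ret c i wsn :
    let s := procs c i in
    ~~ crashed s -> op s = WWait wsn ->
    n - t <= #|[pred j : 'I_n | w_sync s j == wsn]| ->
    step c (Config (with_proc c i
              (PState (history s) (w_sync s) (r_sync s) Idle (hdls s)
                      (crashed s))) (net c) (sent c))
| st_read_inv c i :
    let s := procs c i in
    ~~ crashed s -> op s = Idle ->
    let rsn := (r_sync s i).+1 in
    let s' := PState (history s) (w_sync s) (upd (r_sync s) i rsn) (RWait1 rsn)
                     (hdls s) (crashed s) in
    let ps := [seq (i, j, MRead) | j <- enum 'I_n & j != i] in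
    step c (send c ps (with_proc c i s'))
(* read(): first wait satisfied; sn <- w_sync_i[i] *)
| st_read_mid c i rsn :
    let s := procs c i in
    ~~ crashed s -> op s = RWait1 rsn ->
    n - t <= #|[pred j : 'I_n | r_sync s j == rsn]| ->
    step c (Config (with_proc c i
              (PState (history s) (w_sync s) (r_sync s) (RWait2 (w_sync s i))
                      (hdls s) (crashed s))) (net c) (sent c))
(* read(): second wait satisfied; returns history_i[sn] *)
| st_read_ret c i sn :
    let s := procs c i in
    ~~ crashed s -> op s = RWait2 sn ->
    n - t <= #|[pred j : 'I_n | sn <= w_sync s j]| ->
    step c (Config (with_proc c i
              (PState (history s) (w_sync s) (r_sync s) Idle (hdls s)
                      (crashed s))) (net c) (sent c))
(* receipt of WRITE(b,v) from p_j at p_i: the handler starts and blocks *)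
| st_recv_write c i j b v s1 s2 :
    let s := procs c i in
    ~~ crashed s -> net c = s1 ++ (j, i, MWrite b v) :: s2 ->
    step c (Config (with_proc c i
              (PState (history s) (w_sync s) (r_sync s) (op s)
                      (HWrite j b v :: hdls s) (crashed s)))
              (s1 ++ s2) (sent c))
(* receipt of READ() from p_j at p_i: sn <- w_sync_i[i], then block *)
| st_recv_read c i j s1 s2 :
    let s := procs c i in
    ~~ crashed s -> net c = s1 ++ (j, i, MRead) :: s2 ->
    step c (Config (with_proc c i
              (PState (history s) (w_sync s) (r_sync s) (op s)
                      (HRead j (w_sync s i) :: hdls s) (crashed s)))
              (s1 ++ s2) (sent c))
| st_recv_proceed c i j s1 s2 :
    let s := procs c i in
    ~~ crashed s -> net c = s1 ++ (j, i, MProceed) :: s2 ->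
    step c (Config (with_proc c i
              (PState (history s) (w_sync s)
                      (upd (r_sync s) j (r_sync s j).+1) (op s)
                      (hdls s) (crashed s)))
              (s1 ++ s2) (sent c))
(* a blocked WRITE(b,v) handler of p_i (message from p_j) resumes;
   case wsn = w_sync_i[i] + 1 *)
| st_hwrite_new c i j b v h1 h2 :
    let s := procs c i in
    ~~ crashed s -> hdls s = h1 ++ HWrite j b v :: h2 ->
    b = (w_sync s j + 1) %% 2 ->
    let wsn := w_sync s j + 1 in
    wsn = w_sync s i + 1 ->
    let ws' := upd (w_sync s) i wsn in
    let ps := [seq (i, l, MWrite (wsn %% 2) v)
              | l <- enum 'I_n & ws' l == wsn - 1] in
    let s' := PState (updn (history s) wsn v) (upd ws' j wsn) (r_sync s)
                     (op s) (h1 ++ h2) (crashed s) in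
    step c (send c ps (with_proc c i s'))
| st_hwrite_old c i j b v h1 h2 :
    let s := procs c i in
    ~~ crashed s -> hdls s = h1 ++ HWrite j b v :: h2 ->
    b = (w_sync s j + 1) %% 2 ->
    let wsn := w_sync s j + 1 in
    wsn <> w_sync s i + 1 ->
    let ps := if wsn < w_sync s i
              then [:: (i, j, MWrite ((wsn + 1) %% 2) (history s (wsn + 1)))]
              else [::] in
    let s' := PState (history s) (upd (w_sync s) j wsn) (r_sync s)
                     (op s) (h1 ++ h2) (crashed s) in
    step c (send c ps (with_proc c i s'))
| st_hread c i j sn h1 h2 :
    let s := procs c i in
    ~~ crashed s -> hdls s = h1 ++ HRead j sn :: h2 ->
    sn <= w_sync s j ->
    let s' := PState (history s) (w_sync s) (r_sync s) (op s) (h1 ++ h2)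
                     (crashed s) in
    step c (send c [:: (i, j, MProceed)] (with_proc c i s'))
| st_crash c i :
    let s := procs c i in
    ~~ crashed s -> ncrashed c < t ->
    step c (Config (with_proc c i
              (PState (history s) (w_sync s) (r_sync s) (op s) (hdls s) true))
              (net c) (sent c)).

Definition is_run (r : nat -> config) : Prop :=
  r 0 = init_config /\
  forall k, step (r k) (r k.+1) \/ r k.+1 = r k.

Definition correct (r : nat -> config) (i : 'I_n) : Prop :=
  forall k, ~~ crashed (procs (r k) i).

Definition nb_write_sent (c : config) (i j : 'I_n) : nat :=
  count (fun p : packet => [&& p.1.1 == i, p.1.2 == j & is_write p.2]) (sent c).

Definition wsync (c : config) (i j : 'I_n) : nat := w_sync (procs c i) j.

End Algorithm.

(* Main.v *)
Require Import Defs.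
From mathcomp Require Import all_boot zify.
Set Implicit Arguments. Unset Strict Implicit.
Section S.
Variables (V : Type) (n t : nat) (w : 'I_n).
Definition cnt (ps : seq (packet V n)) i j :=
  count (fun p : packet V n => [&& p.1.1 == i, p.1.2 == j & is_write p.2]) ps.
Lemma cnt_cat s1 s2 i j : cnt (s1 ++ s2) i j = cnt s1 i j + cnt s2 i j.
Proof. exact: count_cat. Qed.
Lemma cnt_zero ps i j : all (fun p : packet V n => ~~ [&& p.1.1 == i, p.1.2 == j & is_write p.2]) ps -> cnt ps i j = 0.
Proof.
by elim: ps => //= p ps IH /andP[/negbTE -> /IH ->].
Qed.
Lemma cnt_other ps k i j : all (fun p : packet V n => p.1.1 == k) ps -> i != k -> cnt ps i j = 0.
Proof.
move=> H ik; apply: cnt_zero; elim: ps H => //= p ps IH /andP[/eqP -> /IH ->].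
by rewrite eq_sym (negbTE ik).
Qed.
Lemma cnt_bcast k (f : pred 'I_n) g (v : V) j :
  cnt [seq (k, l, MWrite g v) | l <- enum 'I_n & f l] k j = f j.
Proof.
rewrite /cnt count_map count_filter /=.
rewrite (eq_count (a2 := fun l => (l == j) && f j)); last first.
  by move=> l /=; rewrite eqxx andbT; case: eqP => // ->.
case: (f j).
  rewrite (eq_count (a2 := pred1 j)); last by move=> l; rewrite andbT.
  by rewrite (count_uniq_mem j (enum_uniq 'I_n)) mem_enum.
by rewrite (eq_count (a2 := pred0)) ?count_pred0 // => l; rewrite andbF.
Qed.


Definition Q (P : 'I_n -> pstate V n) (sent : seq (packet V n)) (i : 'I_n) :=
  forall j, j != i -> w_sync (P i) j <= w_sync (P i) i /\
    cnt sent i j = w_sync (P i) j + (w_sync (P i) j < w_sync (P i) i).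
Lemma Q_frame P sent k s' ps i : i != k -> all (fun p : packet V n => p.1.1 == k) ps ->
  Q P sent i -> Q (upd P k s') (sent ++ ps) i.
Proof. by move=> ik Hps HQ j ji; rewrite /upd (negbTE ik) cnt_cat (cnt_other _ Hps ik) addn0; apply: HQ. Qed.
Lemma Q_all P sent k s' ps : w_sync s' = w_sync (P k) ->
  all (fun p : packet V n => (p.1.1 == k) && ~~ is_write p.2) ps ->
  (forall i, Q P sent i) -> forall i, Q (upd P k s') (sent ++ ps) i.
Proof.
move=> Hws Hps HQ i; case: (eqVneq i k) => [->|ik]; last first.
  apply: Q_frame => //; elim: ps Hps => //= p ps IH /andP[/andP[-> _] /IH] //.
move=> j jk; rewrite /upd eqxx Hws cnt_cat (@cnt_zero ps) ?addn0; first exact: HQ.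
by elim: ps Hps => //= p ps IH /andP[/andP[_ /negbTE ->] /IH ->]; rewrite !andbF.
Qed.
Definition goodp (p : packet V n) := ~~ ((p.1.1 == p.1.2) && is_write p.2).
Definition goodh (x : 'I_n) (h : handler V n) := if h is HWrite y _ _ then y != x else true.
Definition Inv (c : config V n) := [/\ all goodp (net c),
  forall x, all (goodh x) (hdls (procs c x)) & forall i, Q (procs c) (sent c) i].

Lemma hd_upd c k s' : (forall x, all (goodh x) (hdls (procs c x))) ->
  all (goodh k) (hdls s') -> forall x, all (goodh x) (hdls (upd (procs c) k s' x)).
Proof. by move=> H Hk x; rewrite /upd; case: eqP => [->|]. Qed.
Lemma hd_sub (hs h1 h2 : seq (handler V n)) h x : hs = h1 ++ h :: h2 ->
  all (goodh x) hs -> all (goodh x) (h1 ++ h2) /\ goodh x h.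
Proof. by move=> ->; rewrite !all_cat /= => /and3P[-> -> ->]. Qed.
Lemma net_sub (s1 s2 : seq (packet V n)) p : all goodp (s1 ++ p :: s2) -> all goodp (s1 ++ s2) /\ goodp p.
Proof. by rewrite !all_cat /= => /and3P[-> -> ->]. Qed.
Lemma Q_all0 P sent k s' : w_sync s' = w_sync (P k) ->
  (forall i, Q P sent i) -> forall i, Q (upd P k s') sent i.
Proof. by move=> H HQ i; rewrite -[sent]cats0; apply: Q_all. Qed.

Lemma arith a b x : b <= a -> x = b + (b < a) ->
  b <= a.+1 /\ x + (b == a) = b + (b < a.+1).
Proof.
move=> ba ->; split; first by apply: leq_trans ba _.
case: (ltngtP b a) => /= H.
- by rewrite ltnS (ltnW H) addn0.
- by move: ba; rewrite leqNgt H.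
- by rewrite H ltnSn addn0.
Qed.

Lemma step_inv c c' : step t w c c' -> Inv c -> Inv c'.
Proof.
case => {c c'}.
- move=> c v s Hc Hop wsn ws' s' ps [Hn Hh HQ].
  have Hws : forall l, ws' l == wsn - 1 -> l != w.
    move=> l H; apply/eqP => E; rewrite E /ws' /upd eqxx in H.
    by move/eqP: H; rewrite /wsn; lia.
  split => /=.
  + rewrite all_cat Hn /= /ps all_map all_filter; apply/allP => l _ /=.
    apply/implyP => /Hws; rewrite /goodp /= andbT eq_sym; by [].
  + rewrite /with_proc; apply: hd_upd => //=; exact: (Hh w).
  + rewrite /with_proc => i; case: (eqVneq i w) => [->|iw]; last first.
      apply: Q_frame => //; rewrite /ps all_map all_filter; apply/allP => l _ /=.
      by rewrite eqxx implybT.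
    move=> j jw /=; rewrite /upd eqxx /= cnt_cat /ps cnt_bcast /ws' /upd eqxx (negbTE jw).
    have [H1 H2] := HQ w j jw.
    by rewrite /wsn subn1 /=; apply: arith.
- move=> c i wsn s Hc Hop _ [Hn Hh HQ]; split => //=.
  + by rewrite /with_proc; apply: hd_upd.
  + exact: Q_all0.
- move=> c i s Hc Hop rsn s' ps [Hn Hh HQ]; split => /=.
  + rewrite all_cat Hn /= /ps all_map all_filter; apply/allP => l _ /=.
    by rewrite /goodp /= andbF implybT.
  + by rewrite /with_proc; apply: hd_upd.
  + apply: Q_all => //; rewrite /ps all_map all_filter; apply/allP => l _ /=.
    by rewrite eqxx implybT.
- move=> c i rsn s Hc Hop _ [Hn Hh HQ]; split => //=.
  + by rewrite /with_proc; apply: hd_upd.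
  + exact: Q_all0.
- move=> c i sn s Hc Hop _ [Hn Hh HQ]; split => //=.
  + by rewrite /with_proc; apply: hd_upd.
  + exact: Q_all0.
- move=> c i j b v s1 s2 s Hc Hnet [Hn Hh HQ]; rewrite Hnet in Hn.
  have [Hn' Hp] := net_sub Hn; split => //=.
  + by rewrite /with_proc; apply: hd_upd => //=; rewrite /s Hh andbT; move: Hp; rewrite /goodp /= andbT.
  + exact: Q_all0.
- move=> c i j s1 s2 s Hc Hnet [Hn Hh HQ]; rewrite Hnet in Hn.
  have [Hn' Hp] := net_sub Hn; split => //=.
  + by rewrite /with_proc; apply: hd_upd => //=; rewrite /s Hh.
  + exact: Q_all0.
- move=> c i j s1 s2 s Hc Hnet [Hn Hh HQ]; rewrite Hnet in Hn.
  have [Hn' Hp] := net_sub Hn; split => //=.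
  + by rewrite /with_proc; apply: hd_upd => //=; rewrite /s Hh.
  + exact: Q_all0.
- move=> c i k b v h1 h2 s Hc Hhd Hb wsn Hwsn ws' ps s' [Hn Hh HQ].
  have [Hh' Hk] := hd_sub Hhd (Hh i); rewrite /= in Hk.
  have Hws : forall l, ws' l == wsn - 1 -> l != i.
    move=> l H; apply/eqP => E; rewrite E /ws' /upd eqxx in H.
    by move/eqP: H; rewrite Hwsn; lia.
  split => /=.
  + rewrite all_cat Hn /= /ps all_map all_filter; apply/allP => l _ /=.
    apply/implyP => /Hws; rewrite /goodp /= andbT eq_sym; by [].
  + by rewrite /with_proc; apply: hd_upd => //=.
  + rewrite /with_proc => i'; case: (eqVneq i' i) => [->|ii]; last first.
      apply: Q_frame => //; rewrite /ps all_map all_filter; apply/allP => l _ /=.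
      by rewrite eqxx implybT.
    move=> j ji /=; rewrite /upd eqxx /= cnt_cat /ps cnt_bcast /ws' /upd eqxx (negbTE ji).
    have ik : (i == k) = false by apply/negbTE; rewrite eq_sym.
    rewrite ik /=.
    have [H1 H2] := HQ i j ji.
    case: (eqVneq j k) => [E|jk].
      subst j.
      have E : w_sync s k = w_sync s i by move: Hwsn; rewrite /wsn; lia.
      rewrite -/s E ltnn addn0 in H2.
      by rewrite H2 Hwsn E addn1 subn1 /= eqxx ltnn addn0 addn1.
    rewrite Hwsn subn1 addn1 /=; exact: arith.
- move=> c i k b v h1 h2 s Hc Hhd Hb wsn Hwsn ps s' [Hn Hh HQ].
  have [Hh' Hk] := hd_sub Hhd (Hh i); rewrite /= in Hk.
  have Hps : all (fun p : packet V n => p.1.1 == i) ps by rewrite /ps; case: ifP => //= _; rewrite eqxx.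
  split => /=.
  + rewrite all_cat Hn /= /ps; case: ifP => //= _.
    by rewrite /goodp /= andbT andbT eq_sym.
  + by rewrite /with_proc; apply: hd_upd => //=.
  + rewrite /with_proc => i'; case: (eqVneq i' i) => [->|ii]; last first.
      by apply: Q_frame.
    move=> j ji /=; rewrite /upd eqxx /= cnt_cat.
    have ik : (i == k) = false by apply/negbTE; rewrite eq_sym.
    rewrite /upd ik -/s.
    have [H1 H2] := HQ i j ji.
    case: (eqVneq j k) => [E|jk].
      subst j.
      have lt : w_sync s k < w_sync s i.
        by rewrite ltn_neqAle H1 andbT; apply/eqP => E; apply: Hwsn; rewrite /wsn E.
      rewrite -/s lt in H2; rewrite /ps H2 /wsn addn1 -/s lt.
      split => //; case: ifP => _ /=; by rewrite /cnt /= ?eqxx.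
    split => //.
    rewrite /ps; case: ifP => _ /=; last by rewrite addn0.
    by rewrite H2 /cnt /= eqxx eq_sym (negbTE jk) /= !addn0.
- move=> c i j sn h1 h2 s Hc Hhd Hsn s' [Hn Hh HQ]; split => /=.
  + by rewrite all_cat Hn /= /goodp /= andbF.
  + rewrite /with_proc; apply: hd_upd => //=; by case: (hd_sub Hhd (Hh i)).
  + by apply: Q_all => //=; rewrite eqxx.
- move=> c i s Hc _ [Hn Hh HQ]; split => //=.
  + by rewrite /with_proc; apply: hd_upd.
  + exact: Q_all0.
Qed.
End S.

Lemma run_inv (V : Type) (v0 : V) (n t : nat) (w : 'I_n) r :
  is_run v0 t w r -> forall k, Inv (r k).
Proof.
case=> H0 Hs; elim => [|k IH].
  by rewrite H0; split => //= i j _; rewrite /cnt /=.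
by case: (Hs k) => [/step_inv|->]; [apply|].
Qed.

Theorem lemma5 (V : Type) (v0 : V) (n t : nat) (w : 'I_n)
    (Hnt : 2 * t < n)
    (r : nat -> config V n) (Hrun : is_run v0 t w r)
    (i : 'I_n) (Hi : correct r i) (j : 'I_n) (Hji : j != i) (tm : nat) :
  (forall x : nat,
     wsync (r tm) i i = x -> wsync (r tm) i j = x ->
     nb_write_sent (r tm) i j = x) /\
  (forall x : nat,
     x < wsync (r tm) i i -> wsync (r tm) i j = x ->
     nb_write_sent (r tm) i j = x.+1).
Proof.
have [_ _ HQ] := run_inv Hrun tm.
have [H1 H2] := HQ i j Hji.
rewrite /nb_write_sent -/(cnt _ _ _) H2 /wsync; split => x.
  by move=> -> ->; rewrite ltnn addn0.
by move=> lt E; rewrite E in lt *; rewrite lt addn1.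
Qed.
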